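(* Let $G(\pi)=\mathcal{F}(\mu^\pi)$ be a general-utility objective with $\mathcal{F}$ concave and differentiable, and $\Gamma(\pi)=\nabla\mathcal{F}(\mu^\pi)$. For any policies $\pi,\pi'$, $$G(\pi')-G(\pi)\le\frac{1}{1-\gamma}\,\mathbb{E}_{s\sim d^{\pi'}}\Big[\big[\mathcal{T}^{\pi'}_{\Gamma(\pi)}V^\pi_{\Gamma(\pi)}\big](s)-V^\pi_{\Gamma(\pi)}(s)\Big].$$
   Context: Finite MDP: states $\mathcal{S}$, actions $\mathcal{A}$, transition kernel $\mathcal{P}$, initial distribution $\rho$, discount $\gamma\in[0,1)$. Occupancy measure $\mu^\pi(s,a)=\sum_{s_0}\rho(s_0)\sum_{\tau\ge0}\gamma^\tau\Pr^\pi[s_\tau=s,a_\tau=a\mid s_0]$; $\mathcal{K}$ the convex set of occupancy measures; $\mathcal{F}:\mathcal{K}\to\mathbb{R}$. For bounded $u$, $Q^\pi_u(s,a)=\mathbb{E}[\sum_{\tau\ge0}\gamma^\tau u(s_\tau,a_\tau)\mid s_0=s,a_0=a]$, $V^\pi_u(s)=\sum_a\pi(a\mid s)Q^\pi_u(s,a)$. Bellman operator: $[\mathcal{T}^{\pi'}_uV](s)=\sum_a\pi'(a\mid s)\big(u(s,a)+\gamma\sum_{s'}\mathcal{P}(s'\mid s,a)V(s')\big)$. Discounted state distribution: $d^{\pi'}=(1-\gamma)\rho^\top(I-\gamma P^{\pi'})^{-1}$ where $P^{\pi'}[s,s']=\sum_a\pi'(a\mid s)\mathcal{P}(s'\mid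 s,a)$. *)

(* Defs.v *)
From HB Require Import structures.
From mathcomp Require Import all_boot all_order all_algebra.
From mathcomp Require Import all_classical all_reals all_analysis.
Set Implicit Arguments. Unset Strict Implicit. Unset Printing Implicit Defensive.
Import Order.TTheory GRing.Theory Num.Theory.
Import numFieldNormedType.Exports.
Local Open Scope classical_set_scope.
Local Open Scope ring_scope.

(* Finite MDP with states 'I_nS and actions 'I_nA.
   Transition kernel: Ptr s a s' = P(s' | s, a).  Initial distribution rho.
   Policies are stochastic matrices pi : 'M_(nS, nA), pi s a = pi(a | s). *)
Section MDP.
Variables (R : realType) (nS nA : nat).
Variable Ptr : 'I_nS -> 'I_nA -> 'I_nS -> R.
Variable rho : 'I_nS -> R.
Variable gamma : R.

Definition is_kernel :=
  (forall s a s', 0 <= Ptr s a s') /\ (forall s a, \sum_s' Ptr s a s' = 1).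

Definition is_distr :=
  (forall s, 0 <= rho s) /\ \sum_s rho s = 1.

Definition is_policy (pi : 'M[R]_(nS, nA)) :=
  (forall s a, 0 <= pi s a) /\ (forall s, \sum_a pi s a = 1).

Definition Ppi (pi : 'M[R]_(nS, nA)) : 'M[R]_nS :=
  \matrix_(s, s') \sum_a pi s a * Ptr s a s'.

(* Pr^pi[s_t = s, a_t = a | s_0 = s0] *)
Definition prob_sa (pi : 'M[R]_(nS, nA)) (t : nat) (s0 s : 'I_nS) (a : 'I_nA) : R :=
  ((Ppi pi) ^+ t) s0 s * pi s a.

Definition disc_sum (f : nat -> R) : R :=
  limn (fun n => \sum_(0 <= t < n) gamma ^+ t * f t).

Definition occ (pi : 'M[R]_(nS, nA)) : 'M[R]_(nS, nA) :=
  \matrix_(s, a) \sum_s0 rho s0 * disc_sum (fun t => prob_sa pi t s0 s a).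

Definition occK : set 'M[R]_(nS, nA) :=
  [set mu | exists pi, is_policy pi /\ mu = occ pi].

(* Pr^pi[s_t = s', a_t = a' | s_0 = s, a_0 = a] *)
Definition cprob_sa (pi : 'M[R]_(nS, nA)) (s : 'I_nS) (a : 'I_nA) (t : nat)
    (s' : 'I_nS) (a' : 'I_nA) : R :=
  match t with
  | 0 => ((s' == s) && (a' == a))%:R
  | t'.+1 => \sum_s1 Ptr s a s1 * ((Ppi pi) ^+ t') s1 s' * pi s' a'
  end.

(* Q^pi_u(s,a) = E[ sum_t gamma^t u(s_t,a_t) | s_0 = s, a_0 = a ] *)
Definition Qfun (pi : 'M[R]_(nS, nA)) (u : 'M[R]_(nS, nA)) (s : 'I_nS) (a : 'I_nA) : R :=
  disc_sum (fun t => \sum_s' \sum_a' cprob_sa pi s a t s' a' * u s' a').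

Definition Vfun (pi : 'M[R]_(nS, nA)) (u : 'M[R]_(nS, nA)) (s : 'I_nS) : R :=
  \sum_a pi s a * Qfun pi u s a.

Definition bellman (pi' : 'M[R]_(nS, nA)) (u : 'M[R]_(nS, nA)) (V : 'I_nS -> R)
    (s : 'I_nS) : R :=
  \sum_a pi' s a * (u s a + gamma * \sum_s' Ptr s a s' * V s').

Definition dstate (pi' : 'M[R]_(nS, nA)) : 'rV[R]_nS :=
  (1 - gamma) *: ((\row_s rho s) *m invmx (1%:M - gamma *: Ppi pi')).

End MDP.

Definition concave_on (R : realType) (m n : nat) (K : set 'M[R]_(m, n))
    (F : 'M[R]_(m, n) -> R) :=
  forall x y t, K x -> K y -> 0 <= t <= 1 ->
    t * F x + (1 - t) * F y <= F (t *: x + (1 - t) *: y).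

Definition gradient (R : realType) (m n : nat) (F : 'M[R]_(m, n) -> R)
    (x : 'M[R]_(m, n)) : 'M[R]_(m, n) :=
  \matrix_(i, j) ('d F x (delta_mx i j : 'M[R]_(m, n))).

(* Main.v *)
Require Import Defs.
From HB Require Import structures.
From mathcomp Require Import all_boot all_order all_algebra.
From mathcomp Require Import all_classical all_reals all_analysis.
Import Order.TTheory GRing.Theory Num.Theory.
Import numFieldNormedType.Exports.
Local Open Scope classical_set_scope.
Local Open Scope ring_scope.

From mathcomp Require Import ring lra.
Set Implicit Arguments. Unset Strict Implicit.

Lemma sum_cvg (R : realType) (I : Type) (r : seq I) (P : pred I)
  (u : I -> nat -> R) (l : I -> R) :
  (forall i, u i n @[n --> \oo] --> l i) ->
  (\sum_(i <- r | P i) u i n) @[n --> \oo] --> \sum_(i <- r | P i) l i.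
Proof.
move=> H; elim: r => [|i r IH].
  under eq_cvg do rewrite big_nil.
  rewrite big_nil; exact: cvg_cst.
under eq_cvg do rewrite big_cons.
rewrite big_cons; case: (P i) => //.
exact: (cvgD (H i) IH).
Qed.

Lemma geom_le (R : realType) (g : R) : 0 <= g < 1 ->
  forall n, \sum_(0 <= t < n) g ^+ t <= (1 - g)^-1.
Proof.
move=> /andP[g0 g1] n.
have E : (1 - g) * \sum_(0 <= t < n) g ^+ t = 1 - g ^+ n.
  elim: n => [|n IH]; first by rewrite big_nil expr0 mulr0 subrr.
  rewrite big_nat_recr //= mulrDr IH exprS; ring.
have gp : 0 < 1 - g by rewrite subr_gt0.
rewrite -(ler_pM2l gp) E mulfV ?gt_eqF //.
by rewrite lerBlDr lerDl exprn_ge0.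
Qed.

Definition stoch (R : realType) n (P : 'M[R]_n) :=
  (forall i j, 0 <= P i j) /\ (forall i, \sum_j P i j = 1).
Arguments stoch {R n}.

Lemma stoch1 (R : realType) n : stoch (1%:M : 'M[R]_n).
Proof.
split=> [i j|i]; first by rewrite mxE ler0n.
rewrite (bigD1 i) //= big1 => [|j /negbTE ji]; rewrite mxE ?eqxx ?addr0 //.
by rewrite eq_sym ji.
Qed.

Lemma stoch_mul (R : realType) n (A B : 'M[R]_n) :
  stoch A -> stoch B -> stoch (A *m B).
Proof.
move=> [A0 A1] [B0 B1]; split=> [i j|i].
  rewrite mxE; apply: sumr_ge0 => k _; exact: mulr_ge0.
under eq_bigr do rewrite mxE.
rewrite exchange_big /=.
under eq_bigr do rewrite -big_distrr /= B1 mulr1.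
exact: A1.
Qed.

Lemma stoch_pow (R : realType) n (A : 'M[R]_n) t :
  stoch A -> stoch (A ^+ t).
Proof.
move=> sA; elim: t => [|t IH]; first by rewrite expr0; exact: stoch1.
rewrite exprS; exact: stoch_mul.
Qed.

Lemma stoch_le1 (R : realType) n (A : 'M[R]_n) i j : stoch A -> A i j <= 1.
Proof.
move=> [A0 A1]; rewrite -(A1 i) (bigD1 j) //= lerDl.
by apply: sumr_ge0 => k _.
Qed.

Definition Mlim (R : realType) n (P : 'M[R]_n) (g : R) : 'M[R]_n :=
  \matrix_(i, j) limn (fun m => \sum_(0 <= t < m) g ^+ t * (P ^+ t) i j).

Lemma Neumann_cvg (R : realType) n (P : 'M[R]_n) (g : R) i j :
  stoch P -> 0 <= g < 1 ->
  (\sum_(0 <= t < m) g ^+ t * (P ^+ t) i j) @[m --> \oo] --> Mlim P g i j.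
Proof.
move=> sP hg; rewrite mxE.
have /andP[g0 g1] := hg.
apply: nondecreasing_is_cvgn.
  apply/nondecreasing_seqP => m; rewrite big_nat_recr //= lerDl.
  apply: mulr_ge0; first exact: exprn_ge0.
  by have [] := stoch_pow m sP.
exists (1 - g)^-1 => _ [m _ <-].
apply: le_trans (geom_le hg m).
apply: ler_sum => t _.
rewrite -[leRHS]mulr1; apply: ler_wpM2l; first exact: exprn_ge0.
exact: stoch_le1 (stoch_pow t sP).
Qed.

Lemma Neumann_l (R : realType) n (P : 'M[R]_n) (g : R) :
  stoch P -> 0 <= g < 1 ->
  Mlim P g = 1%:M + g *: (P *m Mlim P g).
Proof.
move=> sP hg; apply/matrixP => i j.
rewrite [LHS]mxE !mxE.
apply: cvg_lim => //.
pose u m := \sum_(0 <= t < m) g ^+ t * (P ^+ t) i j.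
rewrite -/(u @ \oo) -(cvg_shiftS u) /u /=.
have E : forall m, \sum_(0 <= t < m.+1) g ^+ t * (P ^+ t) i j =
   (i == j)%:R + g * \sum_k P i k * \sum_(0 <= t < m) g ^+ t * (P ^+ t) k j.
  move=> m; rewrite big_nat_recl // expr0 mul1r mxE; congr (_ + _).
  rewrite big_distrr /=.
  under [RHS]eq_bigr do rewrite mulrA big_distrr /=.
  rewrite exchange_big /=.
  apply: eq_bigr => t _; rewrite !exprS -[P * _]/(P *m _) mxE big_distrr /=.
  apply: eq_bigr => k _ /=; ring.
under eq_cvg do rewrite E.
apply: cvgD; first exact: cvg_cst.
apply: cvgMl_tmp.
apply: sum_cvg => k.
apply: cvgMl_tmp.
exact: Neumann_cvg.
Qed.

Lemma Neumann_r (R : realType) n (P : 'M[R]_n) (g : R) :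
  stoch P -> 0 <= g < 1 ->
  Mlim P g = 1%:M + g *: (Mlim P g *m P).
Proof.
move=> sP hg; apply/matrixP => i j.
rewrite [LHS]mxE !mxE.
apply: cvg_lim => //.
pose u m := \sum_(0 <= t < m) g ^+ t * (P ^+ t) i j.
rewrite -/(u @ \oo) -(cvg_shiftS u) /u /=.
have E : forall m, \sum_(0 <= t < m.+1) g ^+ t * (P ^+ t) i j =
   (i == j)%:R + g * \sum_k (\sum_(0 <= t < m) g ^+ t * (P ^+ t) i k) * P k j.
  move=> m; rewrite big_nat_recl // expr0 mul1r mxE; congr (_ + _).
  rewrite big_distrr /=.
  under [RHS]eq_bigr do rewrite big_distrl big_distrr /=.
  rewrite exchange_big /=.
  apply: eq_bigr => t _; rewrite [g ^+ _.+1]exprS [P ^+ _.+1]exprSr -[_ * P]/(_ *m P) mxE big_distrr /=.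
  apply: eq_bigr => k _ /=; ring.
under eq_cvg do rewrite E.
apply: cvgD; first exact: cvg_cst.
apply: cvgMl_tmp.
apply: sum_cvg => k.
apply: cvgMr_tmp.
exact: Neumann_cvg.
Qed.

Lemma Ppi_stoch (R : realType) nS nA (Ptr : 'I_nS -> 'I_nA -> 'I_nS -> R)
  (pi : 'M[R]_(nS, nA)) : is_kernel Ptr -> is_policy pi -> stoch (Ppi Ptr pi).
Proof.
move=> [P0 P1] [p0 p1]; split=> [i j|i].
  rewrite mxE; apply: sumr_ge0 => a _; exact: mulr_ge0.
under eq_bigr do rewrite mxE.
rewrite exchange_big /=.
under eq_bigr do rewrite -big_distrr /= P1 mulr1.
exact: p1.
Qed.

Lemma occ_eq (R : realType) nS nA (Ptr : 'I_nS -> 'I_nA -> 'I_nS -> R) rho g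
  (pi : 'M[R]_(nS, nA)) s a : is_kernel Ptr -> is_policy pi -> 0 <= g < 1 ->
  occ Ptr rho g pi s a =
  \sum_s0 rho s0 * (Mlim (Ppi Ptr pi) g s0 s * pi s a).
Proof.
move=> hP hpi hg; rewrite mxE; apply: eq_bigr => s0 _; congr (_ * _).
rewrite /disc_sum; apply: cvg_lim; first by [].
have E : forall n, \sum_(0 <= t < n) g ^+ t * prob_sa Ptr pi t s0 s a =
  (\sum_(0 <= t < n) g ^+ t * (Ppi Ptr pi ^+ t) s0 s) * pi s a.
  by move=> n; rewrite big_distrl; apply: eq_bigr => t _; rewrite /prob_sa mulrA.
under eq_cvg do rewrite E.
apply: cvgMr_tmp; apply: Neumann_cvg => //; exact: Ppi_stoch.
Qed.

Lemma psum_linl (R : realType) (I : Type) (r : seq I) (g : R) (c : I -> R)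
  (f : nat -> I -> R) m :
  \sum_(0 <= t < m) g ^+ t * (\sum_(i <- r) c i * f t i) =
  \sum_(i <- r) c i * \sum_(0 <= t < m) g ^+ t * f t i.
Proof.
under eq_bigr do rewrite big_distrr /=.
rewrite exchange_big /=; apply: eq_bigr => i _.
rewrite big_distrr /=; apply: eq_bigr => t _; ring.
Qed.

Lemma psum_linr (R : realType) (I : Type) (r : seq I) (g : R) (c : I -> R)
  (f : nat -> I -> R) m :
  \sum_(0 <= t < m) g ^+ t * (\sum_(i <- r) f t i * c i) =
  \sum_(i <- r) (\sum_(0 <= t < m) g ^+ t * f t i) * c i.
Proof.
under eq_bigr do rewrite big_distrr /=.
rewrite exchange_big /=; apply: eq_bigr => i _.
rewrite big_distrl /=; apply: eq_bigr => t _; ring.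
Qed.

Lemma Q_eq (R : realType) nS nA (Ptr : 'I_nS -> 'I_nA -> 'I_nS -> R) g
  (pi u : 'M[R]_(nS, nA)) s a : is_kernel Ptr -> is_policy pi -> 0 <= g < 1 ->
  Qfun Ptr g pi u s a = u s a + g * \sum_s1 Ptr s a s1 *
     \sum_s' Mlim (Ppi Ptr pi) g s1 s' * (\sum_a' pi s' a' * u s' a').
Proof.
move=> hP hpi hg.
rewrite /Qfun /disc_sum; apply: cvg_lim; first by [].
pose f t := \sum_s' \sum_a' cprob_sa Ptr pi s a t s' a' * u s' a'.
pose v m := \sum_(0 <= t < m) g ^+ t * f t.
rewrite -/(v @ \oo) -(cvg_shiftS v) /v /=.
have f0 : f 0%N = u s a.
  rewrite /f /= (bigD1 s) //= (bigD1 a) //= !eqxx mul1r big1 ?addr0; last first.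
    by move=> a' /negbTE ->; rewrite andbF mul0r.
  rewrite big1 ?addr0 // => s' /negbTE ->; apply: big1 => a' _; by rewrite mul0r.
have fS : forall t, f t.+1 = \sum_s1 Ptr s a s1 *
     \sum_s' (Ppi Ptr pi ^+ t) s1 s' * (\sum_a' pi s' a' * u s' a').
  move=> t; rewrite /f /=.
  under eq_bigr do under eq_bigr do rewrite big_distrl /=.
  under eq_bigr do rewrite exchange_big /=.
  rewrite exchange_big /=; apply: eq_bigr => s1 _.
  rewrite big_distrr /=; apply: eq_bigr => s' _.
  rewrite big_distrr big_distrr /=; apply: eq_bigr => a' _; ring.
have E : forall m, \sum_(0 <= t < m.+1) g ^+ t * f t = u s a + g * \sum_s1 Ptr s a s1 *
     \sum_s' (\sum_(0 <= t < m) g ^+ t * (Ppi Ptr pi ^+ t) s1 s') * (\sum_a' pi s' a' * u s' a').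
  move=> m; rewrite big_nat_recl // expr0 mul1r f0; congr (_ + _).
  under eq_bigr do rewrite fS exprS -mulrA.
  rewrite -big_distrr /= psum_linl; congr (_ * _); apply: eq_bigr => s1 _.
  by rewrite psum_linr.
under eq_cvg do rewrite E.
apply: cvgD; first exact: cvg_cst.
apply: cvgMl_tmp; apply: sum_cvg => s1; apply: cvgMl_tmp.
apply: sum_cvg => s'; apply: cvgMr_tmp.
apply: Neumann_cvg => //; exact: Ppi_stoch.
Qed.

Lemma grad_ineq (R : realType) m n (K : set 'M[R]_(m, n)) (F : 'M[R]_(m, n) -> R)
  x y : concave_on K F -> K x -> K y -> differentiable F x ->
  F y - F x <= \sum_i \sum_j (y - x) i j * gradient F x i j.
Proof.
move=> hc Kx Ky dF.
have -> : \sum_i \sum_j (y - x) i j * gradient F x i j = 'd F x (y - x).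
  rewrite [in RHS](matrix_sum_delta (y - x)) linear_sum; apply: eq_bigr => i _.
  rewrite linear_sum; apply: eq_bigr => j _; rewrite linearZ [gradient _ _ _ _]mxE.
  by [].
rewrite -deriveE //.
have hd : derivable F x (y - x) by exact: diff_derivable.
rewrite /derive.
set f := fun h : R => _.
have hr : f @ 0^'+ --> lim (f @ 0^').
  move=> A /hd /nbhs_ballP [_ /posnumP[e] xe_A].
  by exists e%:num => //= t xe_t /gt_eqF/negbT/xe_A; exact.
apply: (cvgr_to_ge hr).
near=> t.
have t0 : 0 < t by near: t; exact: nbhs_right_gt.
have t1 : t < 1 by near: t; exact: nbhs_right_lt.
have := hc y x t Ky Kx.
rewrite (ltW t0) (ltW t1) => /(_ isT).
have -> : t *: y + (1 - t) *: x = t *: (y - x) + x.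
  by apply/matrixP => i j; rewrite !mxE; ring.
rewrite /f /= => H.
change (F y - F x <= t^-1 * (F (t *: (y - x) + x) - F x)).
rewrite ler_pdivlMl //; lra.
Unshelve. all: by end_near.
Qed.

Definition rcol (R : realType) nS nA (pi u : 'M[R]_(nS, nA)) : 'cV[R]_nS :=
  \col_s \sum_a pi s a * u s a.

Lemma swap_lin (R : realType) nS nA (c : 'I_nA -> R) (d : 'I_nA -> 'I_nS -> R)
  (w : 'I_nS -> R) (g : R) :
  \sum_a c a * (g * \sum_s1 d a s1 * w s1) =
  g * \sum_s1 (\sum_a c a * d a s1) * w s1.
Proof.
under eq_bigr do rewrite mulrCA big_distrr /=.
rewrite -big_distrr /=; congr (_ * _).
rewrite exchange_big /=; apply: eq_bigr => s1 _.
rewrite big_distrl /=; apply: eq_bigr => a _; ring.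
Qed.

Lemma V_eq (R : realType) nS nA (Ptr : 'I_nS -> 'I_nA -> 'I_nS -> R) g
  (pi u : 'M[R]_(nS, nA)) s : is_kernel Ptr -> is_policy pi -> 0 <= g < 1 ->
  Vfun Ptr g pi u s = (Mlim (Ppi Ptr pi) g *m rcol pi u) s 0.
Proof.
move=> hP hpi hg; rewrite /Vfun.
under eq_bigr do rewrite Q_eq //.
have sP := Ppi_stoch hP hpi.
set X := Mlim (Ppi Ptr pi) g *m rcol pi u.
have W : forall s1, \sum_s' Mlim (Ppi Ptr pi) g s1 s' * (\sum_a' pi s' a' * u s' a')
   = X s1 0.
  by move=> s1; rewrite mxE; apply: eq_bigr => s' _; congr (_ * _); rewrite mxE.
under eq_bigr do under eq_bigr do rewrite W.
have HX : X = rcol pi u + g *: (Ppi Ptr pi *m X).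
  by rewrite /X {1}(Neumann_l sP hg) mulmxDl mul1mx -scalemxAl mulmxA.
rewrite [in RHS]HX !mxE.
under eq_bigr do rewrite mulrDr.
rewrite big_split /=; congr (_ + _).
rewrite swap_lin; congr (_ * _); apply: eq_bigr => s1 _.
congr (_ * _); by rewrite mxE.
Qed.

Lemma sum_occ (R : realType) nS nA (Ptr : 'I_nS -> 'I_nA -> 'I_nS -> R) rho g
  (pi u : 'M[R]_(nS, nA)) : is_kernel Ptr -> is_policy pi -> 0 <= g < 1 ->
  \sum_s \sum_a occ Ptr rho g pi s a * u s a =
  \sum_s0 rho s0 * (Mlim (Ppi Ptr pi) g *m rcol pi u) s0 0.
Proof.
move=> hP hpi hg.
under eq_bigr do under eq_bigr do rewrite occ_eq // big_distrl /=.
under eq_bigr do rewrite exchange_big /=.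
rewrite exchange_big /=; apply: eq_bigr => s0 _.
rewrite [(_ *m _) _ _]mxE big_distrr /=; apply: eq_bigr => s _.
rewrite [rcol _ _ _ _]mxE big_distrr big_distrr /=; apply: eq_bigr => a _; ring.
Qed.

Lemma bellman_eq (R : realType) nS nA (Ptr : 'I_nS -> 'I_nA -> 'I_nS -> R) g
  (pi u : 'M[R]_(nS, nA)) V s :
  bellman Ptr g pi u V s =
  rcol pi u s 0 + g * \sum_s' Ppi Ptr pi s s' * V s'.
Proof.
rewrite /bellman mxE.
under eq_bigr do rewrite mulrDr.
rewrite big_split /=; congr (_ + _).
rewrite swap_lin; congr (_ * _); apply: eq_bigr => s1 _.
by rewrite mxE.
Qed.
Unset Implicit Arguments. Set Strict Implicit.

Lemma rowsum (R : realType) n (rho : 'I_n -> R) (X : 'cV[R]_n) :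
  \sum_s0 rho s0 * X s0 0 = ((\row_s rho s) *m X) 0 0.
Proof. rewrite mxE; apply: eq_bigr => s _; by rewrite mxE. Qed.

Theorem lemma16 (R : realType) (nS nA : nat)
    (Ptr : 'I_nS -> 'I_nA -> 'I_nS -> R) (rho : 'I_nS -> R) (gamma : R)
    (F : 'M[R]_(nS, nA) -> R)
    (hP : is_kernel Ptr) (hrho : is_distr rho)
    (hgamma : 0 <= gamma < 1)
    (hconc : concave_on (occK Ptr rho gamma) F)
    (hdiff : forall mu, occK Ptr rho gamma mu -> differentiable F mu)
    (pi pi' : 'M[R]_(nS, nA)) (hpi : is_policy pi) (hpi' : is_policy pi') :
  let G := fun p => F (occ Ptr rho gamma p) in
  let Gam := gradient F (occ Ptr rho gamma pi) in
  let V := Vfun Ptr gamma pi Gam in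
  G pi' - G pi <=
    (1 - gamma)^-1 *
      \sum_s dstate Ptr rho gamma pi' 0 s
               * (bellman Ptr gamma pi' Gam V s - V s).
Proof.
cbv zeta.
set Gam := gradient F (occ Ptr rho gamma pi).
set V := Vfun Ptr gamma pi Gam.
have /andP[g0 g1] := hgamma.
have Kmu : occK Ptr rho gamma (occ Ptr rho gamma pi) by exists pi.
have Kmu' : occK Ptr rho gamma (occ Ptr rho gamma pi') by exists pi'.
have step1 := grad_ineq hconc Kmu Kmu' (hdiff _ Kmu).
apply: (le_trans step1).
set M := Mlim (Ppi Ptr pi) gamma.
set M' := Mlim (Ppi Ptr pi') gamma.
set P' := Ppi Ptr pi'.
set Vc := M *m rcol pi Gam.
have sP' : stoch P' by exact: Ppi_stoch.
have NR : M' = 1%:M + gamma *: (M' *m P') := Neumann_r sP' hgamma.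
have E1 : \sum_i \sum_j (occ Ptr rho gamma pi' - occ Ptr rho gamma pi) i j *
            gradient F (occ Ptr rho gamma pi) i j =
          ((\row_s rho s) *m (M' *m rcol pi' Gam)) 0 0 - ((\row_s rho s) *m Vc) 0 0.
  under eq_bigr do under eq_bigr do rewrite [((_ - _ : 'M[R]_(_, _)) _ _)]mxE [((- _ : 'M[R]_(_, _)) _ _)]mxE mulrBl.
  under eq_bigr do rewrite sumrB.
  by rewrite sumrB !sum_occ // !rowsum.
rewrite E1.
have HM : M' *m (1%:M - gamma *: P') = 1%:M.
  by rewrite mulmxBr mulmx1 -scalemxAr {1}NR addrK.
have [_ Xu] := mulmx1_unit HM.
have Hinv : invmx (1%:M - gamma *: P') = M'.
  by move: (congr1 (mulmx^~ (invmx (1%:M - gamma *: P'))) HM); rewrite -mulmxA mulmxV // mulmx1 mul1mx => ->.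
rewrite /dstate Hinv.
under eq_bigr do rewrite [((_ *: _ : 'M[R]_(_, _)) _ _)]mxE -mulrA.
rewrite -big_distrr mulrA mulVf ?mul1r; last by rewrite subr_eq0 eq_sym lt_eqF.
set xc : 'cV[R]_nS := \col_s (bellman Ptr gamma pi' Gam V s - V s).
have E2 : \sum_s ((\row_s rho s) *m M') 0 s * (bellman Ptr gamma pi' Gam V s - V s)
   = ((\row_s rho s) *m M' *m xc) 0 0.
  by rewrite [RHS]mxE; apply: eq_bigr => s _; rewrite [xc _ _]mxE.
rewrite E2.
have Hx : xc = rcol pi' Gam + gamma *: (P' *m Vc) - Vc.
  apply/matrixP => s j; rewrite (ord1 j) [xc _ _]mxE.
  rewrite [((_ - _ : 'M[R]_(_, _)) _ _)]mxE [((- _ : 'M[R]_(_, _)) _ _)]mxE [((_ + _ : 'M[R]_(_, _)) _ _)]mxE [((_ *: _ : 'M[R]_(_, _)) _ _)]mxE [(P' *m _) _ _]mxE.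
  rewrite bellman_eq /V V_eq //; congr (_ + _ - _); congr (_ * _).
  by apply: eq_bigr => s' _; rewrite /V V_eq.
have HM2 : M' *m xc = M' *m rcol pi' Gam - Vc.
  rewrite Hx mulmxBr mulmxDr -scalemxAr mulmxA scalemxAl.
  have -> : gamma *: (M' *m P') = M' - 1%:M.
    by rewrite {2}NR addrAC subrr add0r.
  by rewrite mulmxBl mul1mx addrA addrAC addrK.
rewrite -mulmxA HM2 mulmxBr.
by rewrite [((_ - _ : 'M[R]_(_, _)) _ _)]mxE [((- _ : 'M[R]_(_, _)) _ _)]mxE.
Qed.
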